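(* Let $(x_t)_{t\in\Omega}$ be a continuous frame for an infinite dimensional Hilbert space $H$. Then there exists $x\in H$ such that $(x_t)_{t\in\Omega}$ does not do stable phase retrieval near $x$. Moreover, the set of $x\in H$ such that $(x_t)_{t\in\Omega}$ does not do stable phase retrieval near $x$ is dense in $H$.
   Context: $H$ is a real or complex Hilbert space. A continuous frame $(x_t)_{t\in\Omega}$ over a measure space $(\Omega,\mu)$ (with $t\mapsto\langle x,x_t\rangle$ measurable for each $x$) satisfies $A\|x\|^2\le\int_\Omega|\langle x,x_t\rangle|^2d\mu\le B\|x\|^2$ for all $x\in H$ with $B\ge A>0$; its analysis operator is $\Theta(x)=(\langle x,x_t\rangle)_{t\in\Omega}\in L_2(\Omega)$, $|\Theta x|=(|\langle x,x_t\rangle|)_{t\in\Omega}$. For $x,y$ with $x\neq\lambda y$ for all scalars $|\lambda|=1$, set $\Psi(x,y)=\||\Theta x|-|\Theta y|\|_{L_2(\Omega)}/\min_{|\lambda|=1}\|x-\lambda y\|$. For $C>0$, the frame does $C$-stable phase retrieval near $x$ if $\liminf_{y\to x,\ y\notin\{\lambda x:|\lambda|=1\}} C\,\Psi(x,y)\ge1$, and does stable phase retrieval near $x$ if this holds for some $C>0$. *)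

(* Defs.v *)
From HB Require Import structures.
From mathcomp Require Import all_boot all_order all_algebra.
From mathcomp Require Import all_classical all_reals all_analysis.
From mathcomp Require Import complex.
Set Implicit Arguments. Unset Strict Implicit. Unset Printing Implicit Defensive.
Import Order.TTheory GRing.Theory Num.Theory.
Import numFieldNormedType.Exports.
Local Open Scope classical_set_scope.
Local Open Scope ring_scope.

(* The scalar field is K (= R for real Hilbert spaces,
   = R[i] for complex ones).  [re] : K -> R recovers the real number from a
   real-valued element of K (for K = R: identity; for K = R[i]: Re), [im] the
   imaginary part (for K = R: 0), [conj] the conjugation (for K = R: id).
   Norms in MathComp are K-valued; the real norm of v is [re `|v|]. *)

(* ip is an inner product (linear in the first argument, conjugate
   symmetric) inducing the norm of H. Together with H being a
   completeNormedModType this makes (H, ip) a Hilbert space. *)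
Definition is_inner_product (K : numFieldType) (conj : K -> K)
    (H : normedModType K) (ip : H -> H -> K) : Prop :=
  [/\ forall (a : K) (x y z : H), ip (a *: x + y) z = a * ip x z + ip y z,
      forall x y : H, ip y x = conj (ip x y) &
      forall x : H, ip x x = `|x| ^+ 2].

Definition infinite_dimensional (K : numFieldType) (H : lmodType K) : Prop :=
  forall (n : nat) (e : 'I_n -> H),
    exists x : H, forall c : 'I_n -> K, x <> \sum_(i < n) c i *: e i.

Definition continuous_frame (K : numFieldType) (R : realType)
    (re im : K -> R) (H : normedModType K) (ip : H -> H -> K)
    (d : measure_display) (T : measurableType d)
    (mu : {measure set T -> \bar R}) (xt : T -> H) : Prop :=
  (forall x : H, measurable_fun setT (fun t => re (ip x (xt t))) /\
                 measurable_fun setT (fun t => im (ip x (xt t)))) /\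
  exists A B : R, 0 < A /\ A <= B /\
    forall x : H,
      ((A * (re `|x|) ^+ 2)%:E <=
         \int[mu]_t ((re `|ip x (xt t)|) ^+ 2)%:E)%E /\
      (\int[mu]_t ((re `|ip x (xt t)|) ^+ 2)%:E <=
         (B * (re `|x|) ^+ 2)%:E)%E.

(* min_{|lambda| = 1} ||x - lambda y|| (the minimum is attained, so it
   equals this infimum) *)
Definition phase_dist (K : numFieldType) (R : realType) (re : K -> R)
    (H : normedModType K) (x y : H) : R :=
  inf [set (re `|x - l *: y|) | l in [set l : K | `|l| = 1]].

Definition Psi (K : numFieldType) (R : realType) (re : K -> R)
    (H : normedModType K) (ip : H -> H -> K)
    (d : measure_display) (T : measurableType d)
    (mu : {measure set T -> \bar R}) (xt : T -> H) (x y : H) : \bar R :=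
  (Lnorm mu 2%:E (fun t => (re `|ip x (xt t)| - re `|ip y (xt t)|)%:E)
     * ((phase_dist re x y)^-1)%:E)%E.

Definition punctured_ball (K : numFieldType) (R : realType) (re : K -> R)
    (H : normedModType K) (x : H) (delta : R) : set H :=
  [set y | re `|y - x| < delta /\ ~ (exists l : K, `|l| = 1 /\ y = l *: x)].

(* C-stable phase retrieval near x:
   liminf_{y -> x, y notin {l x : |l|=1}} C Psi(x,y) >= 1, with liminf
   written out as sup_{delta > 0} inf_{y in punctured ball} *)
Definition C_stable_pr_near (K : numFieldType) (R : realType) (re : K -> R)
    (H : normedModType K) (ip : H -> H -> K)
    (d : measure_display) (T : measurableType d)
    (mu : {measure set T -> \bar R}) (xt : T -> H) (C : R) (x : H) : Prop :=
  (1 <= ereal_sup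
          ((fun delta : R =>
              ereal_inf ((fun y : H => (C%:E * Psi re ip mu xt x y)%E)
                           @` punctured_ball re x delta))
           @` [set delta : R | (0 < delta)%R]))%E.

Definition stable_pr_near (K : numFieldType) (R : realType) (re : K -> R)
    (H : normedModType K) (ip : H -> H -> K)
    (d : measure_display) (T : measurableType d)
    (mu : {measure set T -> \bar R}) (xt : T -> H) (x : H) : Prop :=
  exists C : R, 0 < C /\ C_stable_pr_near re ip mu xt C x.

(* Main.v *)
Require Import Defs.
From HB Require Import structures.
From mathcomp Require Import all_boot all_order all_algebra.
From mathcomp Require Import all_classical all_reals all_analysis.
From mathcomp Require Import complex.
From mathcomp Require Import ring lra.
From mathcomp Require Import measurable_realfun.
Import Order.TTheory GRing.Theory Num.Theory.
Import numFieldNormedType.Exports.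
Local Open Scope classical_set_scope.
Local Open Scope ring_scope.
Set Implicit Arguments. Unset Strict Implicit. Unset Printing Implicit Defensive.
Section Scal.
Variables (R : realType) (K : numFieldType) (conj : K -> K) (re im : K -> R)
  (emb : R -> K).
Hypothesis conjD : forall a b, conj (a + b) = conj a + conj b.
Hypothesis conjM : forall a b, conj (a * b) = conj a * conj b.
Hypothesis conjK : forall a, conj (conj a) = a.
Hypothesis conj1 : conj 1 = 1.
Hypothesis mulconj : forall a, a * conj a = `|a| ^+ 2.
Hypothesis embD : forall r s, emb (r + s) = emb r + emb s.
Hypothesis embM : forall r s, emb (r * s) = emb r * emb s.
Hypothesis emb1 : emb 1 = 1.
Hypothesis re_emb : forall r, re (emb r) = r.
Hypothesis emb_re : forall a : K, 0 <= a -> emb (re a) = a.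
Hypothesis emb_le : forall r s, (emb r <= emb s) = (r <= s).

Lemma conj0 : conj 0 = 0.
Proof. by apply: (addrI (conj 0)); rewrite -conjD !addr0. Qed.
Lemma conjN (a : K) : conj (- a) = - conj a.
Proof. by apply: (addrI (conj a)); rewrite -conjD !subrr conj0. Qed.
Lemma emb0 : emb 0 = 0.
Proof. by apply: (addrI (emb 0)); rewrite -embD !addr0. Qed.
Lemma embN r : emb (- r) = - emb r.
Proof. by apply: (addrI (emb r)); rewrite -embD !subrr emb0. Qed.
Lemma embB r s : emb (r - s) = emb r - emb s.
Proof. by rewrite embD embN. Qed.
Lemma emb_lt r s : (emb r < emb s) = (r < s).
Proof.
rewrite !lt_neqAle emb_le; congr (_ && _).
apply/idP/idP; apply: contra => /eqP h; apply/eqP; first by rewrite h.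
by rewrite -[r]re_emb h re_emb.
Qed.
Lemma emb_ge0 r : (0 <= emb r) = (0 <= r).
Proof. by rewrite -emb0 emb_le. Qed.
Lemma emb_inj r s : emb r = emb s -> r = s.
Proof. by move=> h; rewrite -[r]re_emb h re_emb. Qed.
Lemma embX r n : emb (r ^+ n) = emb r ^+ n.
Proof. by elim: n => [|n IH]; rewrite ?expr0 ?emb1 // !exprS embM IH. Qed.
Lemma emb_norm (a : K) : emb (re `|a|) = `|a|.
Proof. by rewrite emb_re. Qed.
Lemma re_norm_ge0 (a : K) : 0 <= re `|a|.
Proof. by rewrite -emb_ge0 emb_norm. Qed.
Lemma emb_normr r : `|emb r| = emb `|r|.
Proof.
have [r0|r0] := leP 0 r.
  by rewrite ger0_norm ?emb_ge0 // ger0_norm.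
rewrite ltr0_norm ?ltr0_norm // ?embN //.
by rewrite -emb0 emb_lt.
Qed.
Lemma re_norm_emb r : re `|emb r| = `|r|.
Proof. by rewrite emb_normr re_emb. Qed.
Lemma re_normM (a b : K) : re `|a * b| = re `|a| * re `|b|.
Proof. by apply: emb_inj; rewrite embM !emb_norm normrM. Qed.
Lemma re_norm_le (a b : K) : (re `|a| <= re `|b|) = (`|a| <= `|b|).
Proof. by rewrite -emb_le !emb_norm. Qed.
Lemma re_normD (a b : K) : re `|a + b| <= re `|a| + re `|b|.
Proof. by rewrite -emb_le embD !emb_norm ler_normD. Qed.
Lemma re_normN (a : K) : re `|- a| = re `|a|.
Proof. by rewrite normrN. Qed.
Lemma re_norm1 : re `|1 : K| = 1.
Proof. by rewrite normr1 -emb1 re_emb. Qed.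

Lemma norm_1pm (l : K) : `|1 - l| ^+ 2 + `|1 + l| ^+ 2 = 2 + 2 * `|l| ^+ 2.
Proof.
rewrite -(mulconj (1 - l)) -(mulconj (1 + l)) -(mulconj l) conjD conjN conjD conj1.
by rewrite !mulrDr !mulrDl !mulNr !mulrN !mul1r !mulr1 opprK; ring.
Qed.


Variable (H : completeNormedModType K) (ip : H -> H -> K).
Hypothesis Hip : is_inner_product conj ip.

Lemma ipDZl a x y z : ip (a *: x + y) z = a * ip x z + ip y z.
Proof. by case: Hip. Qed.
Lemma ipC x y : ip y x = conj (ip x y).
Proof. by case: Hip. Qed.
Lemma ipxx x : ip x x = `|x| ^+ 2.
Proof. by case: Hip. Qed.
Lemma ip0l z : ip 0 z = 0.
Proof.
have := ipDZl 1 0 0 z; rewrite scaler0 addr0 mul1r => h.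
by apply: (addrI (ip 0 z)); rewrite addr0 -h.
Qed.
Lemma ipDl x y z : ip (x + y) z = ip x z + ip y z.
Proof. by rewrite -[x]scale1r ipDZl mul1r scale1r. Qed.
Lemma ipZl a x z : ip (a *: x) z = a * ip x z.
Proof. by rewrite -[a *: x]addr0 ipDZl ip0l addr0. Qed.
Lemma ipNl x z : ip (- x) z = - ip x z.
Proof. by rewrite -scaleN1r ipZl mulN1r. Qed.
Lemma ipBl x y z : ip (x - y) z = ip x z - ip y z.
Proof. by rewrite ipDl ipNl. Qed.
Lemma ip0r z : ip z 0 = 0.
Proof. by rewrite ipC ip0l conj0. Qed.
Lemma ipDr x y z : ip z (x + y) = ip z x + ip z y.
Proof. by rewrite ipC ipDl conjD -!ipC. Qed.
Lemma ipZr a x z : ip z (a *: x) = conj a * ip z x.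
Proof. by rewrite ipC ipZl conjM -ipC. Qed.
Lemma ipNr x z : ip z (- x) = - ip z x.
Proof. by rewrite ipC ipNl conjN -ipC. Qed.
Lemma ipBr x y z : ip z (x - y) = ip z x - ip z y.
Proof. by rewrite ipDr ipNr. Qed.
Lemma ip_suml (I : Type) (r : seq I) (P : pred I) (F : I -> H) z :
  ip (\sum_(i <- r | P i) F i) z = \sum_(i <- r | P i) ip (F i) z.
Proof.
elim/big_rec2: _ => [|i y1 y2 _ <-]; first by rewrite ip0l.
by rewrite ipDl.
Qed.
Lemma ip_sumr (I : Type) (r : seq I) (P : pred I) (F : I -> H) z :
  ip z (\sum_(i <- r | P i) F i) = \sum_(i <- r | P i) ip z (F i).
Proof.
elim/big_rec2: _ => [|i y1 y2 _ <-]; first by rewrite ip0r.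
by rewrite ipDr.
Qed.

Lemma pythagoras x y : ip x y = 0 -> `|x + y| ^+ 2 = `|x| ^+ 2 + `|y| ^+ 2.
Proof.
move=> xy; rewrite -!ipxx ipDl !ipDr xy (ipC x y) xy conj0.
by rewrite addr0 add0r.
Qed.

Definition N (x : H) := re `|x|.
Lemma emb_N x : emb (N x) = `|x|. Proof. by rewrite /N emb_re. Qed.
Lemma N_ge0 x : 0 <= N x. Proof. by rewrite -emb_ge0 emb_N. Qed.
Lemma N_D x y : N (x + y) <= N x + N y.
Proof. by rewrite -emb_le embD !emb_N ler_normD. Qed.
Lemma N_N x : N (- x) = N x. Proof. by rewrite /N normrN. Qed.
Lemma N_B x y : N (x - y) <= N x + N y.
Proof. by rewrite (le_trans (N_D _ _)) // N_N. Qed.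
Lemma N_Z a x : N (a *: x) = re `|a| * N x.
Proof. by apply: emb_inj; rewrite embM !emb_N emb_norm normrZ. Qed.
Lemma N_eq0 x : N x = 0 -> x = 0.
Proof. by move=> h; apply/eqP; rewrite -normr_eq0 -emb_N h emb0. Qed.
Lemma N0 : N 0 = 0.
Proof. by apply: emb_inj; rewrite emb_N normr0 emb0. Qed.
Lemma N_ipxx x : ip x x = emb (N x ^+ 2).
Proof. by rewrite embX emb_N ipxx. Qed.

Lemma delta_sum (c : nat -> K) n j : (j < n)%N ->
  \sum_(i < n) c i * ((i : nat) == j)%:R = c j.
Proof.
move=> jn; rewrite (bigD1 (Ordinal jn)) //= eqxx mulr1 big1 ?addr0 //.
move=> i /negbTE; rewrite -val_eqE /= => ->; by rewrite mulr0.
Qed.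

Definition ortho (L : seq H) := forall i j, (i < size L)%N -> (j < size L)%N ->
  ip L`_i L`_j = (i == j)%:R.

Lemma ext_exists L : infinite_dimensional H -> ortho L ->
  exists e, `|e| = 1 /\ forall i, (i < size L)%N -> ip e L`_i = 0.
Proof.
move=> inf oL; have [z zP] := inf (size L) (fun i => L`_i).
pose p := z - \sum_(i < size L) ip z L`_i *: L`_i.
have pL j : (j < size L)%N -> ip p L`_j = 0.
  move=> jn; rewrite /p ipBl ip_suml.
  under eq_bigr => i _ do rewrite ipZl (oL i j (ltn_ord i) jn).
  by rewrite (delta_sum (fun i => ip z L`_i)) // subrr.
have p0 : p != 0.
  apply/eqP => p0; apply: (zP (fun i => ip z L`_i)).
  by apply/eqP; rewrite -subr_eq0 -/p p0.
have np0 : `|p| != 0 by rewrite normr_eq0.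
exists (`|p|^-1 *: p); split.
  by rewrite normrZ ger0_norm ?invr_ge0 // mulVf.
by move=> i iL; rewrite ipZl pL // mulr0.
Qed.

Definition ext (L : seq H) := xget 0 (fun e => `|e| = 1 /\
  forall i, (i < size L)%N -> ip e L`_i = 0).

Lemma extP L : infinite_dimensional H -> ortho L ->
  `|ext L| = 1 /\ forall i, (i < size L)%N -> ip (ext L) L`_i = 0.
Proof.
move=> inf oL; have := ext_exists inf oL => ex.
exact: (xgetPex 0 ex).
Qed.

Fixpoint Ls (L : seq H) n := if n is n'.+1 then rcons (Ls L n') (ext (Ls L n')) else L.

Lemma size_Ls L n : size (Ls L n) = (size L + n)%N.
Proof. by elim: n => [|n IH] /=; rewrite ?addn0 // size_rcons IH addnS. Qed.

Lemma ortho_rcons L e : ortho L -> `|e| = 1 ->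
  (forall i, (i < size L)%N -> ip e L`_i = 0) -> ortho (rcons L e).
Proof.
move=> IH e1 eL.
move=> i j; rewrite size_rcons !ltnS => ile jle.
move: ile jle; rewrite [(i <= _)%N]leq_eqVlt [(j <= _)%N]leq_eqVlt => /orP[/eqP ->|ilt] /orP[/eqP ->|jlt].
- by rewrite !nth_rcons ltnn eqxx ipxx e1 expr1n.
- by rewrite !nth_rcons ltnn eqxx jlt eL // (gtn_eqF jlt).
- by rewrite !nth_rcons ltnn eqxx ilt ipC eL // conj0 (ltn_eqF ilt).
- by rewrite !nth_rcons ilt jlt; exact: IH.
Qed.

Lemma ortho_Ls L n : infinite_dimensional H -> ortho L -> ortho (Ls L n).
Proof.
move=> inf oL; elim: n => [|n IH] //=.
have [e1 eL] := extP inf IH.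
move=> i j; rewrite size_rcons !ltnS => ile jle.
move: ile jle; rewrite [(i <= _)%N]leq_eqVlt [(j <= _)%N]leq_eqVlt => /orP[/eqP ->|ilt] /orP[/eqP ->|jlt].
- by rewrite !nth_rcons ltnn eqxx ipxx e1 expr1n.
- by rewrite !nth_rcons ltnn eqxx jlt eL // (gtn_eqF jlt).
- by rewrite !nth_rcons ltnn eqxx ilt ipC eL // conj0 (ltn_eqF ilt).
- by rewrite !nth_rcons ilt jlt; exact: IH.
Qed.
Lemma nth_Ls L n m i : (n <= m)%N -> (i < size (Ls L n))%N ->
  (Ls L m)`_i = (Ls L n)`_i.
Proof.
move=> nm; elim: m nm => [|m IH]; first by rewrite leqn0 => /eqP ->.
rewrite leq_eqVlt => /orP[/eqP -> //|]; rewrite ltnS => nm iL /=.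
rewrite nth_rcons IH // ifT //.
by rewrite (leq_trans iL) // !size_Ls leq_add2l.
Qed.

Definition useq L n := ext (Ls L n).

Lemma useq_nth L n : useq L n = (Ls L n.+1)`_(size L + n).
Proof. by rewrite /= nth_rcons size_Ls ltnn eqxx. Qed.

Lemma useq_ortho L n m : infinite_dimensional H -> ortho L ->
  ip (useq L n) (useq L m) = (n == m)%:R.
Proof.
move=> inf oL.
have oLs := ortho_Ls (n := (maxn n m).+1) inf oL.
rewrite !useq_nth -(nth_Ls (n := n.+1) (m := (maxn n m).+1)) ?size_Ls ?ltn_add2l ?ltnS ?leq_maxl //.
rewrite -(nth_Ls (n := m.+1) (m := (maxn n m).+1)) ?size_Ls ?ltn_add2l ?ltnS ?leq_maxr //.
by rewrite oLs ?size_Ls ?ltn_add2l ?ltnS ?leq_maxl ?leq_maxr // eqn_add2l.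
Qed.

Lemma useq_L L n i : infinite_dimensional H -> ortho L -> (i < size L)%N ->
  ip (useq L n) L`_i = 0.
Proof.
move=> inf oL iL; have [_ eL] := extP inf (ortho_Ls (n := n) inf oL).
rewrite -(nth_Ls (n := 0) (m := n)) //= in eL *.
by rewrite eL // size_Ls ltn_addr.
Qed.

Lemma useq_norm L n : infinite_dimensional H -> ortho L -> `|useq L n| = 1.
Proof. by move=> inf oL; have [] := extP inf (ortho_Ls (n := n) inf oL). Qed.

Lemma bessel (u : nat -> H) z n :
  (forall i j, ip (u i) (u j) = (i == j)%:R) ->
  \sum_(i < n) `|ip z (u i)| ^+ 2 <= `|z| ^+ 2.
Proof.
move=> ou; pose c i := ip z (u i).
pose p := z - \sum_(i < n) c i *: u i.
have pu j : (j < n)%N -> ip p (u j) = 0.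
  move=> jn; rewrite /p ipBl ip_suml.
  under eq_bigr => i _ do rewrite ipZl ou.
  by rewrite (delta_sum c) // subrr.
have pp : ip p p = ip p z.
  rewrite {2}/p ipBr ip_sumr big1 ?subr0 // => i _.
  by rewrite ipZr pu // mulr0.
have : 0 <= ip p p by rewrite ipxx exprn_ge0.
rewrite pp /p ipBl ip_suml ipxx subr_ge0.
under eq_bigr => i _ do rewrite ipZl -(conjK (ip (u i) z)) -ipC mulconj.
by [].
Qed.

Lemma emb_sum (I : Type) (r : seq I) (P : pred I) (F : I -> R) :
  emb (\sum_(i <- r | P i) F i) = \sum_(i <- r | P i) emb (F i).
Proof. exact: (big_morph emb embD emb0). Qed.

Lemma norm_conj (a : K) : `|conj a| = `|a|.
Proof.
apply/eqP; rewrite -(@eqrXn2 _ 2) //.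
by rewrite -!mulconj conjK mulrC.
Qed.

Lemma re_norm_ip_conj x y : re `|ip x y| = re `|ip y x|.
Proof. by rewrite (ipC x y) norm_conj. Qed.

Lemma bessel_re (u : nat -> H) z n :
  (forall i j, ip (u i) (u j) = (i == j)%:R) ->
  \sum_(i < n) (re `|ip z (u i)|) ^+ 2 <= N z ^+ 2.
Proof.
move=> ou; rewrite -emb_le emb_sum embX emb_N.
under eq_bigr => i _ do rewrite embX emb_norm.
exact: bessel.
Qed.

Lemma weak_null (u : nat -> H) z :
  (forall i j, ip (u i) (u j) = (i == j)%:R) ->
  (fun i => (re `|ip (u i) z|) ^+ 2) @ \oo --> (0 : R).
Proof.
move=> ou; apply: cvg_series_cvg_0.
apply: nondecreasing_is_cvgn.
  apply: nondecreasing_series => k _ _; exact: exprn_ge0 (re_norm_ge0 _).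
exists (N z ^+ 2) => _ [n _ <-].
rewrite /series /= big_mkord.
under eq_bigr => i _ do rewrite re_norm_ip_conj.
exact: bessel_re.
Qed.

Variables (dd : measure_display) (T : measurableType dd)
  (mu : {measure set T -> \bar R}) (xt : T -> H).
Hypothesis Hfr : continuous_frame re im ip mu xt.
Hypothesis re_sq : forall a : K, (re `|a|) ^+ 2 = re a ^+ 2 + im a ^+ 2.

Definition fr z t := re `|ip z (xt t)|.

Lemma fr_ge0 z t : 0 <= fr z t. Proof. exact: re_norm_ge0. Qed.

Lemma mfr2 z : measurable_fun setT (fun t => fr z t ^+ 2).
Proof.
have [mz _] := Hfr; case: (mz z) => m1 m2.
have -> : (fun t => fr z t ^+ 2) =
   (fun t => re (ip z (xt t)) ^+ 2 + im (ip z (xt t)) ^+ 2).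
  by apply/funext => t; rewrite /fr re_sq.
by apply: measurable_funD; apply: measurable_funX.
Qed.

Lemma escape L (G2 : T -> R) (eta : R) : infinite_dimensional H -> ortho L ->
  measurable_fun setT G2 -> (forall t, 0 <= G2 t) ->
  (\int[mu]_t (G2 t)%:E < +oo)%E -> 0 < eta ->
  exists e, `|e| = 1 /\ (forall i, (i < size L)%N -> ip e L`_i = 0) /\
   (\int[mu]_t (Num.min (G2 t) (fr e t ^+ 2))%:E < eta%:E)%E.
Proof.
move=> inf oL mG G0 iG eta0.
pose u := useq L.
have ou : forall i j, ip (u i) (u j) = (i == j)%:R.
  by move=> i j; apply: useq_ortho.
pose f_ n t := (Num.min (G2 t) (fr (u n) t ^+ 2))%:E.
have mf_ : forall n, measurable_fun setT (f_ n).
  by move=> n; apply/measurable_EFinP; apply: measurable_minr => //; exact: mfr2.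
have mf : measurable_fun setT (cst 0%E : T -> \bar R) by exact: measurable_cst.
have f_f : \forall x \ae mu, setT x -> f_ ^~ x @ \oo --> (cst 0%E : T -> \bar R) x.
  apply: aeW => t _ /=; apply: cvg_EFin; first by apply: nearW.
  apply: (@squeeze_cvgr _ _ _ _ (cst 0) (fun n => fr (u n) t ^+ 2)).
  - apply: nearW => n /=; rewrite le_min G0 exprn_ge0 ?fr_ge0 //=.
    by rewrite ge_min lexx orbT.
  - exact: cvg_cst.
  - exact: (weak_null (xt t) ou).
have ig : mu.-integrable setT (fun t => (G2 t)%:E).
  apply/integrableP; split; first exact/measurable_EFinP.
  under eq_integral => t _ do rewrite gee0_abs ?lee_fin //.
  exact: iG.
have f_g : \forall x \ae mu, forall n, setT x -> (`|f_ n x| <= (G2 x)%:E)%E.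
  apply: aeW => t n _; rewrite gee0_abs ?lee_fin ?le_min ?G0 ?exprn_ge0 ?fr_ge0 //.
  by rewrite ge_min lexx.
have [_ _ h] := dominated_convergence measurableT mf_ mf f_f ig f_g.
rewrite integral0 in h.
have /fine_cvgP[finh cvgh] := h.
have h1 := cvgr_dist_lt _ _ cvgh _ eta0.
have fin2 : \forall n \near \oo, (\int[mu]_t f_ n t)%E \is a fin_num /\
    `|0 - fine (\int[mu]_t f_ n t)%E| < eta.
  near=> n; split; [near: n; exact: finh|near: n; exact: h1].
have [n [fn hn]] := filter_ex fin2.
exists (u n); split; first exact: useq_norm.
split; first by move=> i iL; exact: useq_L.
rewrite -(fineK fn) lte_fin; apply: le_lt_trans hn.
by rewrite sub0r normrN ler_norm.
Unshelve. all: by end_near.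
Qed.

Lemma frame_ub : exists B : R, 0 <= B /\ forall z,
  (\int[mu]_t (fr z t ^+ 2)%:E <= (B * N z ^+ 2)%:E)%E.
Proof.
have [_ [A [B [A0 [AB h]]]]] := Hfr.
exists B; split; first by rewrite (le_trans (ltW A0)).
by move=> z; have [_ ->] := h z.
Qed.

Variable (B : R).
Hypothesis B0 : 0 <= B.
Hypothesis HB : forall z, (\int[mu]_t (fr z t ^+ 2)%:E <= (B * N z ^+ 2)%:E)%E.
Hypothesis inf : infinite_dimensional H.
Variable x0 : H.
Variable eps0 : R.
Hypothesis eps0_gt0 : 0 < eps0.

Definition rho (k : nat) : R := (2^-1) ^+ k.+1.
Fixpoint a (k : nat) : R := if k is k'.+1 then a k' * rho k' else eps0.

Lemma rho_gt0 k : 0 < rho k.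
Proof. by rewrite exprn_gt0 // invr_gt0. Qed.
Lemma rho_le_half k : rho k <= 2^-1.
Proof.
rewrite /rho exprS ler_piMr ?invr_ge0 // exprn_ile1 // ?invr_ge0 //.
by rewrite invf_le1 // ler1n.
Qed.
Lemma a_gt0 k : 0 < a k.
Proof. by elim: k => [|k IH] //=; rewrite mulr_gt0 // rho_gt0. Qed.
Lemma a_le_half k : a k.+1 <= a k / 2.
Proof. by rewrite /= ler_pM2l ?a_gt0 // rho_le_half. Qed.
Lemma a_le k : a k <= eps0 * (2^-1) ^+ k.
Proof.
elim: k => [|k IH] /=; first by rewrite expr0 mulr1.
rewrite (le_trans (a_le_half k)) // exprS.
apply: (le_trans (ler_wpM2r _ IH)); first by rewrite invr_ge0.
by rewrite (_ : eps0 * (2^-1 * (2^-1) ^+ k) = eps0 * (2^-1) ^+ k / 2) //; ring.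
Qed.

Definition L0 : seq H := if x0 == 0 then [::] else [:: `|x0|^-1 *: x0].

Lemma conj_eq0 (c : K) : conj c = 0 -> c = 0.
Proof. by move=> h; rewrite -(conjK c) h conj0. Qed.

Lemma conj_ge0 (c : K) : 0 <= c -> conj c = c.
Proof.
move=> c0; have [->|cn0] := eqVneq c 0; first exact: conj0.
apply: (mulfI cn0); rewrite mulconj ger0_norm //.
Qed.

Lemma L0P : ortho L0 /\ forall e, (forall i, (i < size L0)%N -> ip e L0`_i = 0) ->
  ip e x0 = 0.
Proof.
rewrite /L0; case: eqP => [->|/eqP x00]; first by split => // e _; rewrite ip0r.
have nx0 : `|x0| != 0 by rewrite normr_eq0.
split.
  move=> [|i] [|j] //= _ _; rewrite ipZl ipZr ipxx.
  rewrite conj_ge0 ?invr_ge0 // mulrA -expr2 -exprMn mulVf //.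
  by rewrite expr1n.
move=> e /(_ 0%N erefl) /=; rewrite ipZr => /eqP; rewrite mulf_eq0 => /orP[|/eqP //].
by move=> /eqP /conj_eq0 /eqP; rewrite invr_eq0 (negbTE nx0).
Qed.

Definition pick (L : seq H) (w : H) (k : nat) : H := xget (0 : H) (fun e => `|e| = 1 /\
  (forall i, (i < size L)%N -> ip e L`_i = 0) /\
  (\int[mu]_t (Num.min (fr w t ^+ 2 / a k ^+ 2) (fr e t ^+ 2))%:E < (rho k ^+ 2)%:E)%E).

Fixpoint st (k : nat) : seq H * H :=
  if k is k'.+1 then
    (rcons (st k').1 (pick (st k').1 (st k').2 k'),
     (st k').2 + emb (a k') *: pick (st k').1 (st k').2 k')
  else (L0, x0).

Definition Lk k := (st k).1.
Definition wk k := (st k).2.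
Definition ek k := pick (Lk k) (wk k) k.

Lemma LkS k : Lk k.+1 = rcons (Lk k) (ek k). Proof. by []. Qed.
Lemma wkS k : wk k.+1 = wk k + emb (a k) *: ek k. Proof. by []. Qed.

Lemma pickP L w k : ortho L ->
  `|pick L w k| = 1 /\ (forall i, (i < size L)%N -> ip (pick L w k) L`_i = 0) /\
  (\int[mu]_t (Num.min (fr w t ^+ 2 / a k ^+ 2) (fr (pick L w k) t ^+ 2))%:E
     < (rho k ^+ 2)%:E)%E.
Proof.
move=> oL.
suff ex : exists e : H, `|e| = 1 /\
  (forall i, (i < size L)%N -> ip e L`_i = 0) /\
  (\int[mu]_t (Num.min (fr w t ^+ 2 / a k ^+ 2) (fr e t ^+ 2))%:E < (rho k ^+ 2)%:E)%E.
  exact: (xgetPex (0 : H) ex).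
have ak := a_gt0 k.
have mG : measurable_fun setT (fun t => fr w t ^+ 2 / a k ^+ 2).
  by apply: measurable_funM; [exact: mfr2|exact: measurable_cst].
apply: escape => //.
- by move=> t; rewrite divr_ge0 ?exprn_ge0 ?fr_ge0 // ltW.
- under eq_integral => t _ do rewrite mulrC EFinM.
  have m2 : measurable_fun setT (fun t => (fr w t ^+ 2)%:E).
    exact/measurable_EFinP/mfr2.
  have p2 : forall t, setT t -> (0 <= (fr w t ^+ 2)%:E)%E.
    by move=> t _; rewrite lee_fin exprn_ge0 ?fr_ge0.
  have k2 : (0 <= ((a k ^+ 2)^-1)%:E)%E.
    by rewrite lee_fin invr_ge0 exprn_ge0 // ltW.
  rewrite ge0_integralZl //.
  apply: (@le_lt_trans _ _ ((a k ^+ 2)^-1%:E * (B * N w ^+ 2)%:E)%E).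
    by apply: lee_wpmul2l; [rewrite lee_fin invr_ge0 exprn_ge0 // ltW|exact: HB].
  by rewrite -EFinM ltry.
- by rewrite exprn_gt0 // rho_gt0.
Qed.

Lemma inv k : ortho (Lk k) /\ forall e,
  (forall i, (i < size (Lk k))%N -> ip e (Lk k)`_i = 0) -> ip e (wk k) = 0.
Proof.
elim: k => [|k [oL wL]]; first exact: L0P.
have [e1 [eL _]] := pickP (wk k) k oL.
rewrite LkS wkS; split; first exact: ortho_rcons.
move=> e he; rewrite ipDr ipZr wL; last first.
  move=> i iL; have := he i; rewrite size_rcons ltnS (ltnW iL) nth_rcons iL.
  by apply.
have := he (size (Lk k)); rewrite size_rcons ltnS leqnn nth_rcons ltnn eqxx.
by move=> -> //; rewrite mulr0 addr0.
Qed.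

Lemma ekP k : `|ek k| = 1 /\ ip (ek k) (wk k) = 0 /\
  (\int[mu]_t (Num.min (fr (wk k) t ^+ 2 / a k ^+ 2) (fr (ek k) t ^+ 2))%:E
     < (rho k ^+ 2)%:E)%E.
Proof.
have [oL wL] := inv k.
have [e1 [eL hi]] := pickP (wk k) k oL.
by split => //; split => //; apply: wL.
Qed.

Lemma N_embZ (r : R) z : N (emb r *: z) = `|r| * N z.
Proof. by rewrite N_Z re_norm_emb. Qed.

Lemma N_ek k : N (ek k) = 1.
Proof. by have [e1 _] := ekP k; rewrite /N e1 -emb1 re_emb. Qed.

Lemma N_aek k : N (emb (a k) *: ek k) = a k.
Proof. by rewrite N_embZ N_ek mulr1 ger0_norm // ltW // a_gt0. Qed.

Lemma wk_cauchy m n : (m <= n)%N -> N (wk n - wk m) <= 2 * (a m - a n).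
Proof.
elim: n => [|n IH]; first by rewrite leqn0 => /eqP ->; rewrite subrr N0 subrr mulr0.
rewrite leq_eqVlt => /orP[/eqP ->|]; first by rewrite subrr N0 subrr mulr0.
rewrite ltnS => mn; rewrite wkS addrAC (le_trans (N_D _ _)) // N_aek.
have := a_le_half n; have := IH mn; lra.
Qed.

Definition useries k := emb (a k) *: ek k.

Lemma wk_series n : wk n = x0 + series useries n.
Proof.
elim: n => [|n IH]; first by rewrite /series /= big_geq // addr0.
by rewrite wkS IH /series /= big_nat_recr //= addrA.
Qed.

Lemma a_cvg0 : a @ \oo --> (0 : R).
Proof.
apply: (@squeeze_cvgr _ _ _ _ (cst 0) (geometric eps0 (2^-1))).
- by apply: nearW => n /=; rewrite ltW ?a_gt0 // a_le.
- exact: cvg_cst.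
- by apply: cvg_geometric; rewrite ger0_norm ?invr_ge0 // invf_lt1 // ltr1n.
Qed.

Lemma wk_cvg : cvgn wk.
Proof.
have cs : cvgn (series useries).
  apply: cauchy_cvg; apply/cauchy_seriesP => e e0.
  have ee : emb (re e) = e by rewrite emb_re // ltW.
  have re0 : 0 < re e by rewrite -emb_lt ee emb0.
  have [M _ HM] := cvgr_dist_lt _ _ a_cvg0 _ (divr_gt0 re0 (ltr0n _ 4)).
  exists ([set n | (M <= n)%N], [set n | (M <= n)%N]).
    by split; exists M.
  move=> [p q] [/= hp hq]; have [pq|qp] := leqP p q; last first.
    by rewrite big_geq ?normr0 // ltnW.
  rewrite -sub_series_geq // -ee -emb_N emb_lt.
  have -> : series useries q - series useries p = wk q - wk p.
    by rewrite !wk_series opprD addrACA subrr add0r.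
  apply: (le_lt_trans (wk_cauchy pq)).
  have := HM p hp; rewrite sub0r normrN ger0_norm ?ltW ?a_gt0 // => h.
  have := a_gt0 q; lra.
have := cvgD (cvg_cst x0) cs.
have -> : ((fun=> x0) + series useries) = wk by apply/funext => n; rewrite wk_series.
by move=> h; apply/cvg_ex; eexists; exact: h.
Qed.

Definition xlim := lim (wk @ \oo).

Lemma xlim_near m : N (xlim - wk m) <= 2 * a m.
Proof.
apply/ler_addgt0Pr => r r0.
have er : 0 < emb r by rewrite -emb0 emb_lt.
have [M _ HM] := cvgr_dist_lt _ _ wk_cvg _ er.
have h1 := HM (maxn M m) (leq_maxl _ _).
have h2 := wk_cauchy (leq_maxr M m).
have : N (xlim - wk (maxn M m)) < r by rewrite -emb_lt emb_N.
have := N_D (xlim - wk (maxn M m)) (wk (maxn M m) - wk m).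
rewrite addrA subrK.
have := a_gt0 (maxn M m); lra.
Qed.

Lemma mfr z : measurable_fun setT (fr z).
Proof.
have -> : fr z = Num.sqrt \o (fun t => fr z t ^+ 2).
  by apply/funext => t /=; rewrite sqrtr_sqr ger0_norm ?fr_ge0.
apply: measurableT_comp; last exact: mfr2.
apply: continuous_measurable_fun; exact: sqrt_continuous.
Qed.

Lemma fr_diff u v t :
  `|fr (u + v) t - fr (u - v) t| <= 2 * Num.min (fr u t) (fr v t).
Proof.
rewrite /fr ipDl ipBl; set A := ip u (xt t); set Bv := ip v (xt t).
have e1 : A - Bv + (Bv + Bv) = A + Bv by ring.
have h1 := re_normD (A - Bv) (Bv + Bv); rewrite e1 in h1.
have e2 : A + Bv + - (Bv + Bv) = A - Bv by ring.
have h2 := re_normD (A + Bv) (- (Bv + Bv)); rewrite e2 re_normN in h2.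
have e3 : A + A + - (A - Bv) = A + Bv by ring.
have h3 := re_normD (A + A) (- (A - Bv)); rewrite e3 re_normN in h3.
have e4 : A + A + - (A + Bv) = A - Bv by ring.
have h4 := re_normD (A + A) (- (A + Bv)); rewrite e4 re_normN in h4.
have hA := re_normD A A; have hB := re_normD Bv Bv.
rewrite minr_pMr // le_min; apply/andP; split; rewrite ler_norml; apply/andP; split; lra.
Qed.

Lemma ident1 (W b : H) (l : K) :
  (W + b) - l *: (W - b) = (1 - l) *: W + (1 + l) *: b.
Proof.
rewrite scalerBr opprB scalerBl scalerDl !scale1r.
rewrite addrACA [b + _]addrC.
by rewrite addrACA [l *: b + b]addrC.
Qed.

Lemma sq_le (F : numDomainType) (x y : F) : 0 <= x -> 0 <= y -> x ^+ 2 <= y ^+ 2 -> x <= y.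
Proof. by move=> hx hy; rewrite ler_pXn2r // ?nnegrE. Qed.

Definition bb k := emb (a k.+1) *: ek k.+1.
Definition rr k := xlim - wk k.+2.
Definition WW k := wk k.+1 + rr k.
Definition yy k := WW k - bb k.

Lemma xlimE k : xlim = WW k + bb k.
Proof. by rewrite /WW /rr /bb wkS addrAC addrC subrK. Qed.

Lemma emb2 : emb 2 = 2.
Proof. by rewrite -[2%R]/(1 + 1)%R embD emb1. Qed.

Lemma norm_bb k : `|bb k| = emb (a k.+1).
Proof.
have [e1 _] := ekP k.+1.
by rewrite /bb normrZ e1 mulr1 emb_normr ger0_norm // ltW // a_gt0.
Qed.

Lemma ip_w_e k : ip (wk k) (ek k) = 0.
Proof. by have [_ [h _]] := ekP k; rewrite ipC h conj0. Qed.

Lemma w_big k : emb (a k.+1) <= `|wk k.+1|.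
Proof.
have hp : ip (wk k) (emb (a k) *: ek k) = 0 by rewrite ipZr ip_w_e mulr0.
have h := pythagoras hp; rewrite -wkS in h.
have [e1 _] := ekP k.
have hb : `|emb (a k) *: ek k| = emb (a k).
  by rewrite normrZ e1 mulr1 emb_normr ger0_norm // ltW // a_gt0.
apply: sq_le; [by rewrite emb_ge0 ltW // a_gt0|by []|].
rewrite h hb.
have hh : emb (a k) ^+ 2 <= `|wk k| ^+ 2 + emb (a k) ^+ 2 by rewrite lerDr exprn_ge0.
apply: le_trans hh.
rewrite -!embX emb_le ler_pXn2r ?nnegrE ?ltW ?a_gt0 //.
have := a_le_half k; have := a_gt0 k; lra.
Qed.

Lemma rho_quarter k : rho k.+1 <= 4^-1.
Proof.
rewrite /rho !exprS mulrA.
have h : (2^-1 : R) ^+ k <= 1 by rewrite exprn_ile1 // ?invr_ge0 // invf_le1 // ler1n.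
rewrite (le_trans (ler_wpM2l _ h)) ?mulr1 ?mulr_ge0 ?invr_ge0 //.
by rewrite -invfM -natrM.
Qed.

Lemma dist_lb k (l : K) : `|l| = 1 -> a k.+1 <= N (xlim - l *: yy k).
Proof.
move=> l1.
rewrite {1}(xlimE k) /yy ident1 /WW scalerDr addrAC.
set P := (1 - l) *: wk k.+1 + (1 + l) *: bb k.
set Q := (1 - l) *: rr k.
have ak := a_gt0 k.+1.
have hr : N (rr k) <= 2 * (a k.+1 * rho k.+1) by exact: xlim_near.
have hrho : a k.+1 * rho k.+1 <= a k.+1 / 4.
  by rewrite ler_pM2l // rho_quarter.
have hl1 : re `|1 - l| <= 2.
  have := re_normD 1 (- l); rewrite re_normN re_norm1.
  have -> : re `|l| = 1 by rewrite l1 -emb1 re_emb.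
  by [].
have hQ : N Q <= 2 * N (rr k).
  by rewrite /Q N_Z ler_wpM2r ?N_ge0.
have hPQ : N P <= N (P + Q) + N Q by have := N_B (P + Q) Q; rewrite addrK.
have hP : 2 * a k.+1 <= N P.
  rewrite -emb_le emb_N embM emb2.
  set E := emb (a k.+1).
  have E0 : 0 <= E by rewrite emb_ge0 ltW.
  apply: sq_le; [by rewrite mulr_ge0 | by [] |].
  have hwb : ip ((1 - l) *: wk k.+1) ((1 + l) *: bb k) = 0.
    by rewrite ipZl ipZr /bb ipZr ip_w_e !mulr0.
  rewrite /P (pythagoras hwb) (normrZ (1 - l)) (normrZ (1 + l)) !exprMn norm_bb -/E.
  have hw : E ^+ 2 <= `|wk k.+1| ^+ 2 by rewrite ler_pXn2r ?nnegrE // w_big.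
  have h2 : `|1 - l| ^+ 2 * E ^+ 2 + `|1 + l| ^+ 2 * E ^+ 2 <=
      `|1 - l| ^+ 2 * `|wk k.+1| ^+ 2 + `|1 + l| ^+ 2 * E ^+ 2.
    by rewrite lerD2r ler_wpM2l // exprn_ge0.
  move: h2; apply: le_trans.
  rewrite -mulrDl norm_1pm l1 expr1n.
  have -> : (2 + 2 * 1) * E ^+ 2 = (2 * E) ^+ 2 by ring.
  by rewrite exprMn.
have := N_ge0 (rr k); lra.
Qed.

Lemma min_sq (u v : R) : 0 <= u -> 0 <= v -> Num.min u v ^+ 2 = Num.min (u ^+ 2) (v ^+ 2).
Proof.
move=> u0 v0; case: (leP u v) => h; case: (leP (u ^+ 2) (v ^+ 2)) => h2 //.
  by move: h2; rewrite ltNge ler_pXn2r ?nnegrE // h.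
by move: h2; rewrite ler_pXn2r ?nnegrE // leNgt h.
Qed.

Lemma pt_bound k t : (fr xlim t - fr (yy k) t) ^+ 2 <=
  8 * (a k.+1 ^+ 2 * Num.min (fr (wk k.+1) t ^+ 2 / a k.+1 ^+ 2) (fr (ek k.+1) t ^+ 2))
  + 8 * fr (rr k) t ^+ 2.
Proof.
rewrite {1}(xlimE k) /yy.
have hd := fr_diff (WW k) (bb k) t.
have ak := a_gt0 k.+1.
have hW : fr (WW k) t <= fr (wk k.+1) t + fr (rr k) t.
  by rewrite /WW /fr ipDl re_normD.
have hb : fr (bb k) t = a k.+1 * fr (ek k.+1) t.
  by rewrite /fr /bb ipZl re_normM re_norm_emb ger0_norm // ltW.
set m := Num.min (fr (wk k.+1) t) (a k.+1 * fr (ek k.+1) t).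
have m0 : 0 <= m by rewrite le_min fr_ge0 mulr_ge0 ?fr_ge0 // ltW.
have hm : Num.min (fr (WW k) t) (fr (bb k) t) <= m + fr (rr k) t.
  rewrite hb /m; case: (leP (fr (wk k.+1) t) (a k.+1 * fr (ek k.+1) t)) => h.
    by rewrite ge_min hW.
  by rewrite ge_min; apply/orP; right; rewrite lerDl fr_ge0.
have hm2 : a k.+1 ^+ 2 * Num.min (fr (wk k.+1) t ^+ 2 / a k.+1 ^+ 2)
    (fr (ek k.+1) t ^+ 2) = m ^+ 2.
  have a2 : a k.+1 ^+ 2 != 0 by rewrite expf_neq0 // gt_eqF.
  rewrite minr_pMr ?exprn_ge0 ?ltW // mulrC (divfK a2).
  have afe : 0 <= a k.+1 * fr (ek k.+1) t by rewrite mulr_ge0 ?fr_ge0 // ltW.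
  rewrite /m (min_sq (fr_ge0 _ _) afe).
  have -> : (a k.+1 * fr (ek k.+1) t) ^+ 2 = a k.+1 ^+ 2 * fr (ek k.+1) t ^+ 2 by ring.
  by [].
rewrite hm2.
have r0 := fr_ge0 (rr k) t.
move: hd; rewrite ler_norml => /andP[h1 h2].
set d := fr (WW k + bb k) t - fr (WW k - bb k) t in h1 h2 *.
set rho' := fr (rr k) t in r0 hm *.
have hX1 : 0 <= 2 * (m + rho') - d by lra.
have hX2 : 0 <= 2 * (m + rho') + d by lra.
have := mulr_ge0 hX1 hX2.
have := sqr_ge0 (m - rho').
nra.
Qed.

Lemma int_bound k : (\int[mu]_t ((fr xlim t - fr (yy k) t) ^+ 2)%:E <=
  ((8 * (1 + 4 * B)) * (a k.+1 * rho k.+1) ^+ 2)%:E)%E.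
Proof.
set A2 := a k.+1 ^+ 2.
set M := fun t => Num.min (fr (wk k.+1) t ^+ 2 / A2) (fr (ek k.+1) t ^+ 2).
set R2 := fun t => fr (rr k) t ^+ 2.
have ak := a_gt0 k.+1.
have A20 : 0 <= A2 by rewrite exprn_ge0 // ltW.
have M0 : forall t, 0 <= M t.
  move=> t; rewrite /M le_min; apply/andP; split; last by rewrite exprn_ge0 ?fr_ge0.
  by rewrite divr_ge0 // exprn_ge0 ?fr_ge0.
have R20 : forall t, 0 <= R2 t by move=> t; rewrite exprn_ge0 ?fr_ge0.
have mM : measurable_fun setT M.
  apply: measurable_minr; last exact: mfr2.
  by apply: measurable_funM; [exact: mfr2|exact: measurable_cst].
have mR : measurable_fun setT R2 by exact: mfr2.
have m1 : measurable_fun setT (fun t => ((fr xlim t - fr (yy k) t) ^+ 2)%:E).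
  by apply/measurable_EFinP; apply: measurable_funX; apply: measurable_funB; exact: mfr.
have mA : measurable_fun setT (fun t => ((8 * A2) * M t)%:E).
  by apply/measurable_EFinP; apply: measurable_funM => //; exact: measurable_cst.
have mB : measurable_fun setT (fun t => (8 * R2 t)%:E).
  by apply/measurable_EFinP; apply: measurable_funM => //; exact: measurable_cst.
have hA0 : forall t, setT t -> (0 <= ((8 * A2) * M t)%:E)%E.
  by move=> t _; change (0%:E <= (8 * A2 * M t)%:E)%E; rewrite lee_fin; apply: mulr_ge0; [apply: mulr_ge0|apply: M0].
have hB0 : forall t, setT t -> (0 <= (8 * R2 t)%:E)%E.
  by move=> t _; change (0%:E <= (8 * R2 t)%:E)%E; rewrite lee_fin; apply: mulr_ge0; [|apply: R20].
have hM0 : forall t, setT t -> (0 <= (M t)%:E)%E by move=> t _; rewrite lee_fin.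
have hR0 : forall t, setT t -> (0 <= (R2 t)%:E)%E by move=> t _; rewrite lee_fin.
have mM' : measurable_fun setT (fun t => (M t)%:E) by exact/measurable_EFinP.
have mR' : measurable_fun setT (fun t => (R2 t)%:E) by exact/measurable_EFinP.
apply: (@le_trans _ _ (\int[mu]_t (((8 * A2) * M t)%:E + (8 * R2 t)%:E))%E).
  apply: ge0_le_integral => //.
  - by move=> t _; rewrite lee_fin sqr_ge0.
  - by apply: emeasurable_funD.
  - move=> t _; rewrite -EFinD lee_fin -mulrA; exact: pt_bound.
rewrite ge0_integralD //.
under eq_integral => t _ do rewrite EFinM.
rewrite ge0_integralZl //; last by rewrite lee_fin mulr_ge0.
under [X in (_ + X)%E]eq_integral => t _ do rewrite EFinM.
rewrite ge0_integralZl //.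
have [_ [_ iM]] := ekP k.+1.
have iR := HB (rr k).
have hr : N (rr k) <= 2 * (a k.+1 * rho k.+1) by exact: xlim_near.
have c1 : (0 <= (8 * A2)%:E)%E by rewrite lee_fin mulr_ge0.
have c2 : (0 <= (8 : R)%:E)%E by rewrite lee_fin.
have h := leeD (lee_wpmul2l c1 (ltW iM)) (lee_wpmul2l c2 iR).
apply: (le_trans h).
rewrite -!EFinM -EFinD lee_fin.
have N0 := N_ge0 (rr k).
have hN2 : N (rr k) ^+ 2 <= (2 * (a k.+1 * rho k.+1)) ^+ 2.
  by rewrite ler_pXn2r ?nnegrE // mulr_ge0 // mulr_ge0 // ltW // rho_gt0.
have := ler_wpM2l B0 hN2.
rewrite /A2; set u := a k.+1 * rho k.+1.
move=> hB.
have e : (2 * u) ^+ 2 = 4 * (a k.+1 ^+ 2 * rho k.+1 ^+ 2) by rewrite /u; ring.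
have e2 : u ^+ 2 = a k.+1 ^+ 2 * rho k.+1 ^+ 2 by rewrite /u; ring.
rewrite e2; rewrite e in hB.
set P := a k.+1 ^+ 2 * rho k.+1 ^+ 2 in hB *.
have -> : 8 * a k.+1 ^+ 2 * rho k.+1 ^+ 2 = 8 * P by rewrite /P; ring.
nra.
Qed.

Definition SS := Num.sqrt (8 * (1 + 4 * B)).

Lemma Lnorm_bound k :
  (Lnorm mu 2%:E (fun t => (re `|ip xlim (xt t)| - re `|ip (yy k) (xt t)|)%:E) <=
   (SS * (a k.+1 * rho k.+1))%:E)%E.
Proof.
have hI := int_bound k.
set u := a k.+1 * rho k.+1 in hI *.
rewrite Lnorm.unlock /=.
rewrite (eq_integral (fun x => ((fr xlim x - fr (yy k) x) ^+ 2)%:E)); last first.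
  by move=> x _; rewrite powR_mulrn ?normr_ge0 // real_normK // num_real.
have I0 : (0 <= \int[mu]_t ((fr xlim t - fr (yy k) t) ^+ 2)%:E)%E.
  by apply: integral_ge0 => t _; rewrite lee_fin sqr_ge0.
have Q0 : 0 <= 8 * (1 + 4 * B) * u ^+ 2.
  by rewrite mulr_ge0 ?sqr_ge0 // mulr_ge0 // addr_ge0 // mulr_ge0.
have h2 : (0 : R) <= 2^-1 by rewrite invr_ge0.
have := @gt0_ler_poweR R 2^-1 h2 _ _ _ _ hI.
rewrite !in_itv /= I0 leey lee_fin Q0 leey => /(_ erefl erefl).
rewrite powR12_sqrt // sqrtrM ?mulr_ge0 ?addr_ge0 ?mulr_ge0 //.
have u0 : 0 <= u by rewrite /u mulr_ge0 // ltW // ?a_gt0 ?rho_gt0.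
by rewrite sqrtr_sqr ger0_norm.
Qed.

Lemma pd_lb k : a k.+1 <= phase_dist re xlim (yy k).
Proof.
rewrite /phase_dist; apply: lb_le_inf.
  exists (re `|xlim - 1 *: yy k|); exists 1 => //; exact: normr1.
by move=> _ [l l1 <-]; exact: dist_lb.
Qed.

Lemma not_equiv k : ~ (exists l : K, `|l| = 1 /\ yy k = l *: xlim).
Proof.
move=> [l [l1 hy]].
have l0 : l != 0 by rewrite -normr_eq0 l1 oner_eq0.
have li : `|l^-1| = 1 by rewrite normrV ?unitfE // l1 invr1.
have := dist_lb k li; rewrite hy scalerA mulVf // scale1r subrr N0.
by have := a_gt0 k.+1; lra.
Qed.

Lemma yy_near k : re `|yy k - xlim| <= 2 * a k.+1.
Proof.
rewrite {1}(xlimE k) /yy opprD addrACA subrr add0r.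
have h := N_D (- bb k) (- bb k); rewrite !N_N in h.
have hb : N (bb k) = a k.+1 by rewrite /N norm_bb re_emb.
by rewrite /N in h hb; rewrite hb in h; lra.
Qed.

Lemma Psi_bound k (C : R) : 0 < C ->
  (C%:E * Psi re ip mu xt xlim (yy k) <= (C * SS * rho k.+1)%:E)%E.
Proof.
move=> C0; rewrite /Psi.
have ak := a_gt0 k.+1.
have pd := pd_lb k.
have pd0 : 0 < phase_dist re xlim (yy k) by exact: lt_le_trans pd.
have hL := Lnorm_bound k.
have hinv : ((phase_dist re xlim (yy k))^-1%:E <= (a k.+1)^-1%:E)%E.
  by rewrite lee_fin lef_pV2 ?posrE.
have hp : (0 <= ((phase_dist re xlim (yy k))^-1)%:E)%E.
  by rewrite lee_fin invr_ge0 ltW.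
have h := lee_pmul (Lnorm_ge0 _ _ _) hp hL hinv.
rewrite -EFinM in h.
rewrite -mulrA EFinM; apply: lee_wpmul2l; first by rewrite lee_fin ltW.
apply: (le_trans h).
rewrite lee_fin le_eqVlt; apply/orP; left; apply/eqP.
by field; rewrite gt_eqF.
Qed.

Lemma rho_cvg0 : rho @ \oo --> (0 : R).
Proof.
have -> : rho = geometric (2^-1) (2^-1).
  by apply/funext => k; rewrite /rho /= exprS.
by apply: cvg_geometric; rewrite ger0_norm ?invr_ge0 // invf_lt1 // ltr1n.
Qed.

Lemma xlim_not_stable : ~ stable_pr_near re ip mu xt xlim.
Proof.
move=> [C [C0 Hs]]; move: Hs; rewrite /C_stable_pr_near.
set E := ereal_sup _ => Hs.
have SS0 : 0 <= SS by exact: sqrtr_ge0.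
have : (E <= (2^-1)%:E)%E.
  rewrite /E; apply/ereal_supP => _ [delta d0 <-].
  have h2 : (0:R) < 2 by rewrite ltr0n.
  have [M1 _ H1] := cvgr_dist_lt _ _ a_cvg0 _ (divr_gt0 d0 h2).
  have e2 : 0 < (2 * (C * SS + 1))^-1.
    by rewrite invr_gt0 mulr_gt0 // ltr_wpDl // mulr_ge0 // ltW.
  have [M2 _ H2] := cvgr_dist_lt _ _ rho_cvg0 _ e2.
  set k := maxn M1 M2.
  have hak : a k < delta / 2.
    by have := H1 k (leq_maxl _ _); rewrite sub0r normrN ger0_norm // ltW // a_gt0.
  have hrk : rho k < (2 * (C * SS + 1))^-1.
    by have := H2 k (leq_maxr _ _); rewrite sub0r normrN ger0_norm // ltW // rho_gt0.
  have hmem : [set (C%:E * Psi re ip mu xt xlim y)%E | y in punctured_ball re xlim delta]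
      (C%:E * Psi re ip mu xt xlim (yy k))%E.
    exists (yy k) => //; split; last exact: not_equiv.
    apply: (le_lt_trans (yy_near k)).
    have := a_le_half k; have := a_gt0 k; lra.
  apply: (le_trans (ereal_inf_lbound hmem)).
  apply: (le_trans (Psi_bound k C0)); rewrite lee_fin.
  have hr1 : rho k.+1 <= rho k.
    by rewrite /rho exprS ler_piMl ?exprn_ge0 ?invr_ge0 // invf_le1 // ler1n.
  have r0 := rho_gt0 k.+1.
  have c0 : 0 <= C * SS by rewrite mulr_ge0 // ltW.
  have hh : rho k * (2 * (C * SS + 1)) < 1.
    by rewrite -ltr_pdivlMr ?mulr1 // ?mul1r // mulr_gt0 // ltr_wpDl.
  have hi : (2^-1 : R) * 2 = 1 by rewrite mulVf.
  set c := C * SS in c0 hh *.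
  have hp : 0 <= c * (rho k - rho k.+1) by rewrite mulr_ge0 // subr_ge0.
  have r0' := rho_gt0 k.
  nra.
move=> h; have := le_trans Hs h; rewrite lee_fin.
have : (2^-1 : R) < 1 by rewrite invf_lt1 // ltr1n.
lra.
Qed.

Lemma main_sec : N (xlim - x0) <= 2 * eps0 /\ ~ stable_pr_near re ip mu xt xlim.
Proof. by split; [exact: (xlim_near 0) | exact: xlim_not_stable]. Qed.

End Scal.

Lemma generic (R : realType) (K : numFieldType) (conj : K -> K) (re im : K -> R)
  (emb : R -> K)
  (conjD : forall a b : K, conj (a + b) = conj a + conj b)
  (conjM : forall a b : K, conj (a * b) = conj a * conj b)
  (conjK : forall a : K, conj (conj a) = a)
  (conj1 : conj 1 = 1)
  (mulconj : forall a : K, a * conj a = `|a| ^+ 2)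
  (embD : forall r s : R, emb (r + s) = emb r + emb s)
  (embM : forall r s : R, emb (r * s) = emb r * emb s)
  (emb1 : emb 1 = 1)
  (re_emb : forall r : R, re (emb r) = r)
  (emb_re : forall a : K, 0 <= a -> emb (re a) = a)
  (emb_le : forall r s : R, (emb r <= emb s) = (r <= s))
  (re_sq : forall a : K, re `|a| ^+ 2 = re a ^+ 2 + im a ^+ 2)
  (H : completeNormedModType K) (ip : H -> H -> K)
  (d : measure_display) (T : measurableType d)
  (mu : {measure set T -> \bar R}) (xt : T -> H) :
  is_inner_product conj ip ->
  infinite_dimensional H ->
  continuous_frame re im ip mu xt ->
  (exists x : H, ~ stable_pr_near re ip mu xt x) /\
  dense [set x : H | ~ stable_pr_near re ip mu xt x].
Proof.
move=> Hip inf Hfr.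
have [B [B0 HB]] := frame_ub Hfr.
have key : forall (x0 : H) (eps : R), 0 < eps ->
    exists x, re `|x - x0| < eps /\ ~ stable_pr_near re ip mu xt x.
  move=> x0 eps e0.
  have e4 : 0 < eps / 4 by rewrite divr_gt0.
  have [h1 h2] := main_sec conjD conjM conjK conj1 mulconj embD embM emb1 re_emb
    emb_re emb_le Hip Hfr re_sq B0 HB inf x0 e4.
  by eexists; split; [rewrite /N in h1; lra | exact: h2].
split; first by have [x [_ hx]] := key 0 1 ltr01; exists x.
move=> O [x0 Ox0] oO.
move: oO; rewrite openE => /(_ x0 Ox0) /nbhs_ballP [e e0 be].
have ee : emb (re e) = e by rewrite emb_re // ltW.
have lt_emb : forall r s, (emb r < emb s) = (r < s) by exact: emb_lt.
have re0 : 0 < re e by rewrite -lt_emb ee (emb0 embD).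
have [x [hx nx]] := key x0 (re e) re0.
exists x; split => //; apply: be.
rewrite -ball_normE /ball_ /= distrC.
by rewrite -lt_emb ee emb_re in hx.
Qed.

Unset Implicit Arguments.

Theorem theorem5p2 (R : realType) :
  (* real Hilbert spaces *)
  (forall (H : completeNormedModType R) (ip : H -> H -> R)
          (d : measure_display) (T : measurableType d)
          (mu : {measure set T -> \bar R}) (xt : T -> H),
     is_inner_product id ip ->
     infinite_dimensional H ->
     continuous_frame id (fun _ => 0) ip mu xt ->
     (exists x : H, ~ stable_pr_near id ip mu xt x) /\
     dense [set x : H | ~ stable_pr_near id ip mu xt x])
  /\
  (* complex Hilbert spaces *)
  (forall (H : completeNormedModType R[i]) (ip : H -> H -> R[i])
          (d : measure_display) (T : measurableType d)
          (mu : {measure set T -> \bar R}) (xt : T -> H),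
     is_inner_product (fun z : R[i] => Num.conj z) ip ->
     infinite_dimensional H ->
     continuous_frame (@complex.Re R) (@complex.Im R) ip mu xt ->
     (exists x : H, ~ stable_pr_near (@complex.Re R) ip mu xt x) /\
     dense [set x : H | ~ stable_pr_near (@complex.Re R) ip mu xt x]).
Proof.
split.
- move=> H ip d T mu xt Hip inf Hfr.
  apply: (@generic R R id id (fun _ => 0) id) => //.
  + by move=> a; rewrite /= real_normK ?num_real // expr2.
  + by move=> a; rewrite real_normK ?num_real // expr0n /= addr0.
- move=> H ip d T mu xt Hip inf Hfr.
  apply: (@generic R R[i] (fun z : R[i] => Num.conj z) (@complex.Re R) (@complex.Im R)
            (fun r => (r%:C)%C)) => //.
  + by move=> a b; rewrite rmorphD.
  + by move=> a b; rewrite rmorphM.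
  + by move=> a; rewrite conjCK.
  + by rewrite rmorph1.
  + by move=> a; rewrite normCK.
  + by move=> r s; rewrite rmorphD.
  + by move=> r s; rewrite rmorphM.
  + by case=> x y /ger0_Im /= ->.
  + by move=> r s; exact: lecR.
  + by move=> a; rewrite normc_def /= sqr_sqrtr // addr_ge0 // sqr_ge0.
Qed.
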